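(* Let $\mathcal C$ be a clustering problem satisfying Assumption 1, $P\in\Lambda$ with $p_{\min}=\min_{i\in[K]}\min_{a\in\mathcal X}P_i(a)>0$, $\gamma\in(0,1/K)$, and $\sigma'\in\mathcal C\setminus\{\sigma_P\}$. Then for all $x,y\in\Sigma_K^\gamma$, $$\|\nabla_wg_P^{\sigma'}(x)-\nabla_wg_P^{\sigma'}(y)\|_\infty\le\frac{D}{\gamma}\|x-y\|_\infty,\qquad D=\Big(\max_{\sigma''\in\mathcal C}\max_{m\in[M_{\sigma''}]}|\mathcal A_m^{\sigma''}|\Big)\frac{|\mathcal X|(1-p_{\min})}{4p_{\min}}.$$
   Context: Framework. Let $\mathcal X$ be a finite alphabet with $|\mathcal X|\ge2$, $\mathcal P(\mathcal X)$ the set of probability distributions on $\mathcal X$, and $K\ge2$ an integer (number of arms); $[n]=\{1,\dots,n\}$. A hypothesis is a collection $\sigma=\{\mathcal A_1^\sigma,\dots,\mathcal A_{M_\sigma}^\sigma\}$ ($M_\sigma\ge1$) of pairwise disjoint subsets of $[K]$, each of cardinality at least 2 (clusters); let $\mathcal A^\sigma_{M_\sigma+1}=[K]\setminus\bigcup_{m\le M_\sigma}\mathcal A_m^\sigma$. $\Lambda_\sigma$ is the set of $P\in\mathcal P(\mathcal X)^K$ with $P_i=P_j$ whenever $i,j\in\mathcal A_m^\sigma$ for some $m\le M_\sigma$, and $P_i\neq P_j$ whenever $i\in\mathcal A_{m_1}^\sigma$, $j\in\mathcal A_{m_2}^\sigma$ with $m_1\ne m_2\in[M_\sigma+1]$.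 A clustering problem is a finite set $\mathcal C$ of hypotheses with $|\mathcal C|\ge2$; $\Lambda=\bigcup_{\sigma\in\mathcal C}\Lambda_\sigma$. Hypothesis $\sigma$ dominates $\sigma'$ if every cluster of $\sigma$ is a subset of some cluster of $\sigma'$. Assumption 1: (i) there is no pair $\sigma\neq\sigma'$ in $\mathcal C$ such that $\sigma$ dominates $\sigma'$; (ii) every $P\in\Lambda$ belongs to $\Lambda_\sigma$ for exactly one $\sigma\in\mathcal C$, denoted $\sigma_P$. Functions. $D(P\|Q)$ is the KL divergence. $\Sigma_K=\{w\in\mathbb R^K: w_i\ge0,\sum_iw_i=1\}$ and $\Sigma_K^\gamma=\{w\in\Sigma_K:w_i\ge\gamma\ \forall i\}$. For $\mathcal A\subseteq[K]$, $G(P_{\mathcal A},w_{\mathcal A})=0$ if $w_i=0$ for all $i\in\mathcal A$, and otherwise $G(P_{\mathcal A},w_{\mathcal A})=\sum_{i\in\mathcal A}w_iD(P_i\|W)$ with $W=\sum_{i\in\mathcal A}w_iP_i/\sum_{i\in\mathcal A}w_i$. For $\sigma\in\mathcal C$, $g_P^\sigma(w)=\sum_{m=1}^{M_\sigma}G(P_{\mathcal A_m^\sigma},w_{\mathcal A_m^\sigma})$. The gradient $\nabla_w g_P^{\sigma'}(w)$ is the vector of partial derivatives in $w$ of the formula defining $g_P^{\sigma'}$ (on the positive orthant); explicitly its $i$-th coordinate is $D(P_i\|W_m)$ if $i\in\mathcal A_m^{\sigma'}$, with $W_m=\sum_{j\in\mathcal A_m^{\sigma'}}w_jP_j/\sum_{j\in\mathcal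 A_m^{\sigma'}}w_j$, and $0$ if $i$ is in no cluster of $\sigma'$. *)

(* Defs.v *)
From mathcomp Require Import all_boot all_order all_algebra.
From mathcomp Require Import all_classical all_reals all_analysis.
Set Implicit Arguments. Unset Strict Implicit. Unset Printing Implicit Defensive.
Import Order.TTheory GRing.Theory Num.Theory.
Local Open Scope ring_scope.

Section Defs.
Variables (R : realType) (X : finType) (K : nat).

Definition hyp := {set {set 'I_K}}.

Definition is_hyp (s : hyp) : Prop :=
  [/\ s != finset.set0, finset.trivIset s & forall A, A \in s -> (2 <= #|A|)%N].

Definition is_dist (p : {ffun X -> R}) : Prop :=
  (forall a, 0 <= p a) /\ \sum_a p a = 1.

(* i and j lie in different blocks among A_1..A_M, A_{M+1} = [K] \ cover *)
Definition diff_blocks (s : hyp) (i j : 'I_K) : Prop :=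
  exists2 A, A \in s & (i \in A) != (j \in A).

Definition in_Lambda (s : hyp) (P : 'I_K -> {ffun X -> R}) : Prop :=
  [/\ forall i, is_dist (P i),
      (forall A, A \in s -> forall i j, i \in A -> j \in A -> P i = P j) &
      (forall i j, diff_blocks s i j -> P i <> P j)].

Definition in_LambdaC (C : {set hyp}) P : Prop :=
  exists2 s, s \in C & in_Lambda s P.

Definition dominates (s s' : hyp) : Prop :=
  forall A, A \in s -> exists2 B, B \in s' & A \subset B.

Definition clustering_problem (C : {set hyp}) : Prop :=
  (2 <= #|C|)%N /\ forall s, s \in C -> is_hyp s.

Definition Assumption1 (C : {set hyp}) : Prop :=
  (forall s s', s \in C -> s' \in C -> s != s' -> ~ dominates s s') /\
  (forall P, in_LambdaC C P ->
     exists! s, s \in C /\ in_Lambda s P).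

(* KL divergence, with the convention 0 * ln(0/q) = 0 *)
Definition KL (p q : X -> R) : R :=
  \sum_a (if p a == 0 then 0 else p a * ln (p a / q a)).

Definition mixture (A : {set 'I_K}) (P : 'I_K -> {ffun X -> R})
  (w : 'I_K -> R) (a : X) : R :=
  (\sum_(j in A) w j * P j a) / (\sum_(j in A) w j).

(* gradient of g_P^sigma at w (explicit formula from the paper) *)
Definition grad_g (s : hyp) (P : 'I_K -> {ffun X -> R}) (w : 'I_K -> R)
  (i : 'I_K) : R :=
  match [pick A in s | i \in A] with
  | Some A => KL (P i) (mixture A P w)
  | None => 0
  end.

Definition simplex_ge (gamma : R) (w : 'I_K -> R) : Prop :=
  (forall i, gamma <= w i) /\ \sum_i w i = 1.

Definition supnorm (v : 'I_K -> R) : R := \big[Num.max/0]_i `|v i|.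

(* p_min = min_i min_a P_i(a); 1 is a neutral element since P_i(a) <= 1 *)
Definition pmin (P : 'I_K -> {ffun X -> R}) : R :=
  \big[Num.min/1]_i \big[Num.min/1]_a P i a.

Definition Dconst (C : {set hyp}) (P : 'I_K -> {ffun X -> R}) : R :=
  (\max_(s in C) \max_(A in s) #|A|)%:R * #|X|%:R * (1 - pmin P)
    / (4 * pmin P).

End Defs.

(* Main.v *)
Require Import Defs.
From mathcomp Require Import all_boot all_order all_algebra.
From mathcomp Require Import all_classical all_reals all_analysis.
From mathcomp Require Import ring lra.
Import Order.TTheory GRing.Theory Num.Theory.
Set Implicit Arguments. Unset Strict Implicit.
Local Open Scope ring_scope.
Lemma ln_le_sub1 (R : realType) (x : R) : 0 < x -> ln x <= x - 1.
Proof.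
move=> x0; have := expR_ge1Dx (ln x); rewrite lnK ?posrE //; lra.
Qed.

Lemma ln_diff (R : realType) (m u v : R) : 0 < m -> m <= u -> m <= v ->
  `|ln u - ln v| <= `|u - v| / m.
Proof.
move=> m0 mu mv.
have u0 : 0 < u := lt_le_trans m0 mu.
have v0 : 0 < v := lt_le_trans m0 mv.
wlog vu : u v mu mv u0 v0 / v <= u.
  move=> H; case: (leP v u) => [|/ltW uv]; first exact: H.
  by rewrite distrC (distrC u); apply: H.
have lnle : ln v <= ln u by rewrite ler_ln ?posrE.
rewrite !ger0_norm ?subr_ge0 //.
rewrite -ln_div ?posrE //.
apply: (le_trans (ln_le_sub1 (divr_gt0 u0 v0))).
have -> : u / v - 1 = (u - v) / v by field; rewrite gt_eqF.
by rewrite ler_pdivrMr // mulrAC ler_pdivlMr // ler_wpM2l // subr_ge0.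
Qed.
Section Mix.
Variables (R : realType) (X : finType) (K : nat).
Variables (A : {set 'I_K}) (P : 'I_K -> {ffun X -> R}).

Lemma sum_pos (w : 'I_K -> R) (i : 'I_K) : i \in A -> (forall j, j \in A -> 0 < w j) ->
  0 < \sum_(j in A) w j.
Proof.
move=> iA wp; rewrite (bigD1 i) //=; apply: (lt_le_trans (wp i iA)).
by rewrite lerDl; apply: sumr_ge0 => j /andP[jA _]; apply/ltW/wp.
Qed.

Lemma mix_bounds (w : 'I_K -> R) (i : 'I_K) (a : X) (lo hi : R) :
  i \in A -> (forall j, j \in A -> 0 < w j) ->
  (forall j, j \in A -> lo <= P j a <= hi) ->
  lo <= mixture A P w a <= hi.
Proof.
move=> iA wp hb; have S0 := sum_pos iA wp; rewrite /mixture.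
rewrite ler_pdivlMr // ler_pdivrMr //; apply/andP; split.
  rewrite mulr_sumr; apply: ler_sum => j jA.
  rewrite mulrC; apply: ler_wpM2l; first exact: ltW (wp _ jA).
  by case/andP: (hb _ jA).
rewrite mulr_sumr; apply: ler_sum => j jA.
rewrite [hi * _]mulrC; apply: ler_wpM2l; first exact: ltW (wp _ jA).
by case/andP: (hb _ jA).
Qed.

Lemma mix_diff (x y : 'I_K -> R) (i : 'I_K) (a : X) (g d c : R) :
  i \in A -> 0 < g -> (forall j, j \in A -> g <= x j) ->
  (forall j, j \in A -> g <= y j) -> (forall j, j \in A -> `|x j - y j| <= d) ->
  (forall j, j \in A -> `|P j a - mixture A P y a| <= c) ->
  `|mixture A P x a - mixture A P y a| <= d * c / g.
Proof.
move=> iA g0 gx gy hd hc.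
have xp : forall j, j \in A -> 0 < x j by move=> j jA; exact: lt_le_trans g0 (gx _ jA).
have yp : forall j, j \in A -> 0 < y j by move=> j jA; exact: lt_le_trans g0 (gy _ jA).
have Sx0 := sum_pos iA xp; have Sy0 := sum_pos iA yp.
set Wy := mixture A P y a.
have key : mixture A P x a - Wy =
  (\sum_(j in A) (x j - y j) * (P j a - Wy)) / \sum_(j in A) x j.
  have e0 : \sum_(j in A) y j * (P j a - Wy) = 0.
    rewrite (eq_bigr (fun j => y j * P j a - Wy * y j)); last by move=> j _; ring.
    rewrite sumrB -mulr_sumr /Wy /mixture mulrAC -mulrA divff ?gt_eqF // mulr1.
    by rewrite subrr.
  have e1 : \sum_(j in A) (x j - y j) * (P j a - Wy) =
     \sum_(j in A) x j * P j a - Wy * \sum_(j in A) x j.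
    rewrite (eq_bigr (fun j => (x j * P j a - Wy * x j) - y j * (P j a - Wy)));
      last by move=> j _; ring.
    by rewrite sumrB e0 subr0 sumrB -mulr_sumr.
  rewrite e1 /mixture; field; rewrite gt_eqF //.
rewrite key normrM normfV (ger0_norm (ltW Sx0)).
have gA : #|A|%:R * g <= \sum_(j in A) x j.
  by rewrite mulr_natl -sumr_const; apply: ler_sum => j jA; exact: gx.
have nA : (0 < #|A|)%N by apply/card_gt0P; exists i.
have nA' : (0 : R) < #|A|%:R by rewrite ltr0n.
have s1 : \sum_(j in A) `|(x j - y j) * (P j a - Wy)| <= #|A|%:R * (d * c).
  rewrite mulr_natl -sumr_const; apply: ler_sum => j jA.
  rewrite normrM; apply: ler_pM => //; [exact: hd | exact: hc].
have d0 : 0 <= d by apply: le_trans (hd _ iA).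
have c0 : 0 <= c by apply: le_trans (hc _ iA).
have H := le_trans (ler_norm_sum _ _ _) s1.
rewrite ler_pdivrMr //; apply: (le_trans H).
have dcg : 0 <= d * c / g.
  by apply: divr_ge0; [apply: mulr_ge0 | apply: ltW].
apply: le_trans (ler_wpM2l dcg gA).
rewrite [X in X <= _](_ : _ = d * c / g * (#|A|%:R * g)) //; field; by rewrite gt_eqF.
Qed.
End Mix.

Lemma pmin_le (R : realType) (X : finType) (K : nat) (P : 'I_K -> {ffun X -> R}) i a :
  pmin P <= P i a.
Proof.
rewrite /pmin; apply: (@le_trans _ _ (\big[Num.min/1]_a0 P i a0)); exact: bigmin_le.
Qed.

Lemma le_1_pmin (R : realType) (X : finType) (K : nat) (P : 'I_K -> {ffun X -> R}) i a :
  (2 <= #|X|)%N -> is_dist (P i) -> P i a <= 1 - pmin P.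
Proof.
move=> hX [nn s1].
have : (0 < #|predC1 a|)%N by rewrite cardC1; case: #|X| hX => // -[].
case/card_gt0P => b; rewrite !inE => ba.
have : P i a + P i b <= 1.
  rewrite -s1 (bigD1 a) //= (bigD1 b) /=; last by rewrite ba.
  by rewrite addrA lerDl; apply: sumr_ge0 => *.
have := pmin_le P i b; lra.
Qed.

Theorem lemma5 (R : realType) (X : finType) (K : nat)
  (hX : (2 <= #|X|)%N) (hK : (2 <= K)%N)
  (C : {set hyp K}) (hC : clustering_problem C) (hA1 : Assumption1 R X C)
  (P : 'I_K -> {ffun X -> R}) (sigP : hyp K)
  (hsigP : sigP \in C) (hPsig : in_Lambda sigP P)
  (hpmin : 0 < pmin P)
  (gamma : R) (hg0 : 0 < gamma) (hg1 : gamma < K%:R^-1)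
  (sig' : hyp K) (hsig' : sig' \in C) (hne : sig' != sigP) :
  forall x y : 'I_K -> R, simplex_ge gamma x -> simplex_ge gamma y ->
    supnorm (fun i => grad_g sig' P x i - grad_g sig' P y i)
      <= Dconst C P / gamma * supnorm (fun i => x i - y i).
Proof.
move=> x y [gx _] [gy _].
case: hPsig => hdist _ _.
set dl := supnorm (fun i => x i - y i).
have i0 : 'I_K := Ordinal (leq_trans (isT : (0 < 2)%N) hK).
have pmle := pmin_le P.
have lepm : forall i a, P i a <= 1 - pmin P by move=> i a; exact: le_1_pmin.
have pmhalf : pmin P <= 1/2.
  have : (0 < #|X|)%N by case: #|X| hX.
  case/card_gt0P => a _; have := pmle i0 a; have := lepm i0 a; lra.
have dl0 : 0 <= dl by rewrite /dl /supnorm; exact: bigmax_ge_id.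
have dlj : forall j, `|x j - y j| <= dl.
  by move=> j; rewrite /dl /supnorm; exact: le_bigmax.
have pm0 := hpmin.
have ms2 : (2 <= \max_(s in C) \max_(A in s) #|A|)%N.
  case: hC => _ /(_ _ hsig') [ne _ hcard].
  case/set0Pn: ne => A As.
  apply: leq_trans (hcard _ As) _.
  apply: leq_trans (@leq_bigmax_cond _ (mem sig') (fun A : {set 'I_K} => #|A|) A As) _.
  exact: (@leq_bigmax_cond _ (mem C) (fun s : hyp K => \max_(A in s) #|A|) sig' hsig').
have nX : (2 <= #|X|)%N := hX.
set ms := (\max_(s in C) \max_(A in s) #|A|)%N in ms2.
have msR : (2 : R) <= ms%:R by rewrite (ler_nat R 2 ms).
have nR : (2 : R) <= #|X|%:R by rewrite (ler_nat R 2 #|X|).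
have Bfin : dl * (1 - 2 * pmin P) / gamma / pmin P <= Dconst C P / gamma * dl.
  rewrite /Dconst -/ms.
  have e : Dconst C P / gamma * dl = 
     (ms%:R * #|X|%:R / 4) * (dl * (1 - pmin P) / gamma / pmin P).
    rewrite /Dconst -/ms; field; rewrite ?gt_eqF //.
  rewrite e.
  have t0 : 0 <= dl / gamma / pmin P by rewrite !divr_ge0 // ltW.
  have -> : dl * (1 - 2 * pmin P) / gamma / pmin P = (dl / gamma / pmin P) * (1 - 2 * pmin P).
    by field; rewrite ?gt_eqF.
  have -> : ms%:R * #|X|%:R / 4 * (dl * (1 - pmin P) / gamma / pmin P) =
     (ms%:R * #|X|%:R / 4) * ((dl / gamma / pmin P) * (1 - pmin P)) by field; rewrite ?gt_eqF.
  set t := dl / gamma / pmin P in t0 *.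
  have m4 : 1 <= ms%:R * #|X|%:R / 4 :> R by nra.
  have u : 0 <= t * (1 - pmin P) by apply: mulr_ge0 => //; lra.
  set M := ms%:R * #|X|%:R / 4 in m4 *.
  nra.
have B0 : 0 <= dl * (1 - 2 * pmin P) / gamma / pmin P.
  apply: divr_ge0; last exact: ltW.
  apply: divr_ge0; last exact: ltW.
  by apply: mulr_ge0 => //; lra.
have Hi : forall i, `|grad_g sig' P x i - grad_g sig' P y i| <=
    dl * (1 - 2 * pmin P) / gamma / pmin P.
  move=> i; rewrite /grad_g; case: pickP => [A /andP[As iA] | _]; last by rewrite subrr normr0.
  have Wb : forall w : 'I_K -> R, (forall j, gamma <= w j) -> forall a,
      pmin P <= mixture A P w a <= 1 - pmin P.
    move=> w gw a; apply: (mix_bounds iA) => j jA.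
      exact: lt_le_trans hg0 (gw j).
    by rewrite pmle lepm.
  have Wd : forall a, `|mixture A P x a - mixture A P y a| <= dl * (1 - 2 * pmin P) / gamma.
    move=> a; apply: (mix_diff iA hg0) => j jA; first exact: gx.
      exact: gy.
      exact: dlj.
    have := Wb y gy a; have := pmle j a; have := lepm j a.
    rewrite ler_norml => h1 h2 /andP[h3 h4]; apply/andP; split; lra.
  rewrite /KL -sumrB.
  apply: le_trans (ler_norm_sum _ _ _) _.
  apply: (@le_trans _ _ (\sum_a P i a * (dl * (1 - 2 * pmin P) / gamma / pmin P))).
    apply: ler_sum => a _.
    have Pa : 0 < P i a := lt_le_trans hpmin (pmle i a).
    have Wx0 : 0 < mixture A P x a.
      by case/andP: (Wb x gx a) => h _; exact: lt_le_trans hpmin h.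
    have Wy0 : 0 < mixture A P y a.
      by case/andP: (Wb y gy a) => h _; exact: lt_le_trans hpmin h.
    rewrite gt_eqF // ln_div ?posrE // ln_div ?posrE //.
    set Wx := mixture A P x a; set Wy := mixture A P y a.
    have -> : P i a * (ln (P i a) - ln Wx) - P i a * (ln (P i a) - ln Wy) =
       P i a * (ln Wy - ln Wx) by ring.
    rewrite normrM (ger0_norm (ltW Pa)); apply: ler_wpM2l; first exact: ltW.
    apply: le_trans (ln_diff hpmin _ _) _.
      by case/andP: (Wb y gy a).
      by case/andP: (Wb x gx a).
    apply: ler_wpM2r; first by rewrite invr_ge0 ltW.
    by rewrite distrC; exact: Wd.
  by rewrite -mulr_suml (hdist i).2 mul1r.
rewrite /supnorm; apply: bigmax_le; first exact: le_trans B0 Bfin.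
by move=> i _; exact: le_trans (Hi i) Bfin.
Qed.
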